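(* Let $(A,* )$ be an involutive associative algebra, $(M,* )$ an involutive $A$-bimodule, and $T:M\to A$ a relative Rota-Baxter operator on $A$ with respect to $M$. If $iH^2_T(M,A)=0$, then every finite order deformation of $T$ extends to a deformation of next order.
   Context: An involutive associative algebra is an associative algebra $A$ with a linear map $*:A\to A$ satisfying $a^{**}=a$ and $(ab)^*=b^*a^*$; an involutive $A$-bimodule is an $A$-bimodule $M$ with $*:M\to M$, $u^{**}=u$, $(au)^*=u^*a^*$, $(ua)^*=a^*u^*$. A relative Rota-Baxter operator is a linear $T:M\to A$ with $T(u^* )=T(u)^*$ and $T(u)T(v)=T(uT(v)+T(u)v)$. Notation: $u\circledast v=uT(v)+T(u)v$, $l_T(u,a)=T(u)a-T(ua)$, $r_T(a,u)=aT(u)-T(au)$. Let $i\mathrm{Hom}(M^{\otimes0},A)=\{a\in A\mid a^*=-a\}$ and for $n\ge1$ $i\mathrm{Hom}(M^{\otimes n},A)=\{f\mid f(u_1,\ldots,u_n)^*=(-1)^{\frac{(n-1)(n-2)}{2}}f(u_n^*,\ldots,u_1^* )\}$. Differential: $d_T(a)(u)=l_T(u,a)-r_T(a,u)$, and for $n\ge1$, $(d_Tf)(u_1,\ldots,u_{n+1})=(-1)^n\big[l_T(u_1,f(u_2,\ldots,u_{n+1}))+\sum_{i=1}^n(-1)^if(u_1,\ldots,u_i\circledast u_{i+1},\ldots,u_{n+1})+(-1)^{n+1}r_T(f(u_1,\ldots,u_n),u_{n+1})\big]$; $iH^\bullet_T(M,A)$ is the cohomology of $(i\mathrm{Hom}(M^{\otimes\bullet},A),d_T)$.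 An order $N$ deformation of $T$ is $T_t=\sum_{i=0}^Nt^iT_i$ with $T_0=T$ such that $T_k(u^* )=T_k(u)^*$ and $\sum_{i+j=k}T_i(u)T_j(v)=\sum_{i+j=k}T_i(uT_j(v)+T_j(u)v)$ for $k=0,\ldots,N$. It extends to next order if there is $T_{N+1}\in i\mathrm{Hom}(M,A)$ making $T_t+t^{N+1}T_{N+1}$ an order $N+1$ deformation. *)

(* Defs.v *)
From HB Require Import structures.
From mathcomp Require Import all_boot all_algebra.
Set Implicit Arguments. Unset Strict Implicit. Unset Printing Implicit Defensive.
Import GRing.Theory.
Local Open Scope ring_scope.

Definition islinear (K : fieldType) (V W : lmodType K) (f : V -> W) :=
  forall (k : K) (x y : V), f (k *: x + y) = k *: f x + f y.

Section InvolutiveRB.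
Variable K : fieldType.
Variables A M : lmodType K.
(* the (not necessarily unital) associative multiplication of A and involution of A *)
Variable mul : A -> A -> A.
Variable sA : A -> A.
Variable la : A -> M -> M.
Variable ra : M -> A -> M.
Variable sM : M -> M.

Definition inv_assoc_algebra : Prop :=
  (forall a, islinear (mul a)) /\ (forall b, islinear (fun a => mul a b)) /\
  (forall a b c, mul (mul a b) c = mul a (mul b c)) /\
  islinear sA /\ (forall a, sA (sA a) = a) /\
  (forall a b, sA (mul a b) = mul (sA b) (sA a)).

Definition inv_bimodule : Prop :=
  (forall a, islinear (la a)) /\ (forall u, islinear (fun a => la a u)) /\
  (forall u, islinear (ra u)) /\ (forall a, islinear (fun u => ra u a)) /\
  (forall a b u, la (mul a b) u = la a (la b u)) /\
  (forall a b u, ra u (mul a b) = ra (ra u a) b) /\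
  (forall a b u, ra (la a u) b = la a (ra u b)) /\
  islinear sM /\ (forall u, sM (sM u) = u) /\
  (forall a u, sM (la a u) = ra (sM u) (sA a)) /\
  (forall a u, sM (ra u a) = la (sA a) (sM u)).

Definition circ (S : M -> A) (u v : M) : M := ra u (S v) + la (S u) v.

Definition rel_RB (T : M -> A) : Prop :=
  islinear T /\ (forall u, T (sM u) = sA (T u)) /\
  (forall u v, mul (T u) (T v) = T (circ T u v)).

Section Cochains.
Variable T : M -> A.
Definition lT (u : M) (a : A) : A := mul (T u) a - T (ra u a).
Definition rT (a : A) (u : M) : A := mul a (T u) - T (la a u).

Definition iHom1 (f : M -> A) : Prop :=
  islinear f /\ forall u, sA (f u) = f (sM u).
(* iHom(M^2,A): f(u1,u2) star = f(u2 star, u1 star), sign (-1)^0 = 1 *)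
Definition iHom2 (f : M -> M -> A) : Prop :=
  (forall u, islinear (f u)) /\ (forall v, islinear (fun u => f u v)) /\
  (forall u v, sA (f u v) = f (sM v) (sM u)).

Definition dT1 (f : M -> A) (u1 u2 : M) : A :=
  - (lT u1 (f u2) - f (circ T u1 u2) + rT (f u1) u2).
Definition dT2 (f : M -> M -> A) (u1 u2 u3 : M) : A :=
  lT u1 (f u2 u3) - f (circ T u1 u2) u3 + f u1 (circ T u2 u3) - rT (f u1 u2) u3.

Definition iH2_trivial : Prop :=
  forall f : M -> M -> A, iHom2 f ->
    (forall u1 u2 u3, dT2 f u1 u2 u3 = 0) ->
    exists g : M -> A, iHom1 g /\ forall u1 u2, f u1 u2 = dT1 g u1 u2.

(* T_t = sum_(i<=N) t^i (Ts i) is an order N deformation of T *)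
Definition is_deformation (N : nat) (Ts : nat -> M -> A) : Prop :=
  Ts 0%N = T /\
  (forall i, (i <= N)%N -> islinear (Ts i) /\ forall u, Ts i (sM u) = sA (Ts i u)) /\
  (forall k, (k <= N)%N -> forall u v,
     \sum_(i < k.+1) mul (Ts i u) (Ts (k - i)%N v)
     = \sum_(i < k.+1) Ts i (circ (Ts (k - i)%N) u v)).
End Cochains.
End InvolutiveRB.

(* Main.v *)
Require Import Defs.
From HB Require Import structures.
From mathcomp Require Import zify.
From mathcomp Require Import all_boot all_algebra.
Set Implicit Arguments. Unset Strict Implicit. Unset Printing Implicit Defensive.
Import GRing.Theory.
Local Open Scope ring_scope.

Section Cube.
Variable V : zmodType.

Definition cube (n : nat) (F : nat -> nat -> nat -> V) : V :=
  \sum_(a < n.+1) \sum_(b < n.+1) \sum_(c < n.+1)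
     (if (a + b + c == n)%N then F a b c else 0).

Lemma cube_ext n F G : (forall a b c, F a b c = G a b c) -> cube n F = cube n G.
Proof.
move=> H; apply: eq_bigr => a _; apply: eq_bigr => b _; apply: eq_bigr => c _.
by rewrite H.
Qed.

Lemma cubeD n F G : cube n (fun a b c => F a b c + G a b c) = cube n F + cube n G.
Proof.
rewrite /cube -big_split; apply: eq_bigr => a _.
rewrite -big_split; apply: eq_bigr => b _.
rewrite -big_split; apply: eq_bigr => c _.
case: (_ == n). reflexivity. symmetry; exact: addr0.
Qed.

Lemma cube0 n : cube n (fun _ _ _ => 0) = 0.
Proof.
rewrite /cube big1 // => a _; rewrite big1 // => b _; rewrite big1 // => c _.
by case: (_ == n).
Qed.

Lemma inner1 (m n : nat) (G : nat -> V) :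
  \sum_(c < n.+1) (if (m + c == n)%N then G (nat_of_ord c) else 0)
  = if (m <= n)%N then G (n - m)%N else 0.
Proof.
case: (leqP m n) => Hmn.
  have Hc : (n - m < n.+1)%N by rewrite ltnS leq_subr.
  rewrite (bigD1 (Ordinal Hc)) //= subnKC // eqxx big1 ?addr0 // => c Hc'.
  case: ifP => // /eqP E; exfalso; move/eqP: Hc'; apply.
  by apply: val_inj => /=; apply/eqP; rewrite -(eqn_add2l m) subnKC // E.
rewrite big1 // => c _; case: ifP => // /eqP E.
by exfalso; move: Hmn; rewrite ltnNge; move/negP; apply; rewrite -E leq_addr.
Qed.

Lemma inner2 (m n : nat) (G : nat -> V) : (m <= n)%N ->
  \sum_(b < n.+1) (if (b <= m)%N then G (nat_of_ord b) else 0)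
  = \sum_(b < m.+1) G b.
Proof.
move=> Hmn.
rewrite (@big_ord_widen_cond _ _ _ m.+1 n.+1 predT G) ?ltnS //.
rewrite [RHS]big_mkcond; apply: eq_bigr => i _; by rewrite ltnS.
Qed.

Lemma cubeE n F : cube n F = \sum_(a < n.+1) \sum_(b < (n - a).+1) F a b (n - a - b)%N.
Proof.
rewrite /cube; apply: eq_bigr => a _.
have Ha : (a <= n)%N by rewrite -ltnS.
rewrite -(inner2 (fun b => F a b (n - a - b)%N) (leq_subr a n)).
apply: eq_bigr => b _.
rewrite (inner1 (a + b) n (fun c => F a b c)).
rewrite leq_subRL // subnDA.
done.
Qed.

Lemma cube_cyc n F : cube n F = cube n (fun a b c => F c a b).
Proof.
symmetry; rewrite /cube.
under eq_bigr do rewrite exchange_big.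
rewrite exchange_big; apply: eq_bigr => a _; apply: eq_bigr => b _.
apply: eq_bigr => c _.
by rewrite (_ : (b + c + a = a + b + c)%N) // addnC addnA.
Qed.

Lemma cube_swap12 n F : cube n F = cube n (fun a b c => F b a c).
Proof.
rewrite /cube exchange_big; apply: eq_bigr => a _; apply: eq_bigr => b _.
apply: eq_bigr => c _.
by rewrite (_ : (b + a + c = a + b + c)%N) // (addnC b).
Qed.

Lemma cube_swap13 n F : cube n F = cube n (fun a b c => F c b a).
Proof. by rewrite cube_cyc cube_swap12. Qed.

End Cube.
Arguments cube {V}.
Lemma cube4 (V : zmodType) n (F1 F2 F3 F4 : nat -> nat -> nat -> V) :
  cube n (fun a b c => F1 a b c + F2 a b c + F3 a b c + F4 a b c)
  = cube n F1 + cube n F2 + cube n F3 + cube n F4.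
Proof. by rewrite !cubeD. Qed.
Arguments cube_ext {V}. Arguments cubeD {V}. Arguments cube0 {V}. Arguments cubeE {V}. Arguments cube_cyc {V}. Arguments cube_swap12 {V}. Arguments cube_swap13 {V}.

Lemma zstart (V : zmodType) (x : V) : 0 + x = 0 -> x = 0.
Proof. by rewrite add0r. Qed.

Ltac zloop :=
  lazymatch goal with
  | |- (0 = 0) => reflexivity
  | |- ?L + (- ?t) = 0 => rewrite ?(addrAC _ t); rewrite subrK; zloop
  | |- ?L + ?t = 0 => rewrite ?(addrAC _ (- t)); rewrite addrK; zloop
  end.
Ltac zcancel :=
  rewrite ?opprD ?opprK; apply: zstart; rewrite ?addrA; zloop.


Ltac zeq := apply/eqP; rewrite -subr_eq0; apply/eqP; zcancel.

Section Lin.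
Variables (K : fieldType) (V W : lmodType K) (f : V -> W).
Hypothesis Hf : islinear f.
Lemma linD x y : f (x + y) = f x + f y.
Proof. by rewrite -[x]scale1r Hf !scale1r. Qed.
Lemma lin0 : f 0 = 0.
Proof. by apply: (@addrI _ (f 0)); rewrite addr0 -linD addr0. Qed.
Lemma linN x : f (- x) = - f x.
Proof. by apply/eqP; rewrite -addr_eq0 -linD addNr lin0. Qed.
Lemma linZ k x : f (k *: x) = k *: f x.
Proof. by rewrite -[k *: x]addr0 Hf lin0 addr0. Qed.
Lemma lin_sumE (I : Type) (r : seq I) (P : pred I) (F : I -> V) :
  f (\sum_(i <- r | P i) F i) = \sum_(i <- r | P i) f (F i).
Proof. by apply: big_morph; [exact: linD | exact: lin0]. Qed.
End Lin.

Lemma lin_comp (K : fieldType) (U V W : lmodType K) (f : V -> W) (g : U -> V) :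
  islinear f -> islinear g -> islinear (fun x => f (g x)).
Proof. by move=> Hf Hg k x y; rewrite Hg Hf. Qed.
Lemma lin_add (K : fieldType) (V W : lmodType K) (f g : V -> W) :
  islinear f -> islinear g -> islinear (fun x => f x + g x).
Proof. move=> Hf Hg k x y; rewrite Hf Hg scalerDr; zeq. Qed.
Lemma lin_sub (K : fieldType) (V W : lmodType K) (f g : V -> W) :
  islinear f -> islinear g -> islinear (fun x => f x - g x).
Proof. move=> Hf Hg k x y; rewrite Hf Hg scalerBr; zeq. Qed.
Lemma lin_zero (K : fieldType) (V W : lmodType K) : islinear (fun _ : V => 0 : W).
Proof. by move=> k x y; rewrite scaler0 addr0. Qed.
Lemma lin_sum_fun (K : fieldType) (V W : lmodType K) (m : nat) (F : 'I_m -> V -> W) :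
  (forall i, islinear (F i)) -> islinear (fun x => \sum_(i < m) F i x).
Proof.
move=> H k x y; rewrite scaler_sumr -big_split; apply: eq_bigr => i _.
by rewrite H.
Qed.

Section Alg.
Variables (K : fieldType) (A M : lmodType K) (mul : A -> A -> A) (sA : A -> A)
  (la : A -> M -> M) (ra : M -> A -> M) (sM : M -> M).
Hypothesis HA : inv_assoc_algebra mul sA.
Hypothesis HM : inv_bimodule mul sA la ra sM.

Lemma mul_linr a : islinear (mul a). Proof. by case: HA. Qed.
Lemma mul_linl b : islinear (fun a => mul a b). Proof. by case: HA => _ []. Qed.
Lemma mulA' x y z : mul (mul x y) z = mul x (mul y z). Proof. by case: HA => _ [_ []]. Qed.
Lemma sA_lin : islinear sA. Proof. by case: HA => _ [_ [_ []]]. Qed.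
Lemma sAK x : sA (sA x) = x. Proof. by case: HA => _ [_ [_ [_ []]]]. Qed.
Lemma sA_mul x y : sA (mul x y) = mul (sA y) (sA x). Proof. by case: HA => _ [_ [_ [_ []]]]. Qed.

Lemma la_linr a : islinear (la a). Proof. by case: HM. Qed.
Lemma la_linl u : islinear (fun a => la a u). Proof. by case: HM => _ []. Qed.
Lemma ra_linr u : islinear (ra u). Proof. by case: HM => _ [_ []]. Qed.
Lemma ra_linl a : islinear (fun u => ra u a). Proof. by case: HM => _ [_ [_ []]]. Qed.
Lemma laM' a b u : la (mul a b) u = la a (la b u). Proof. by case: HM => _ [_ [_ [_ []]]]. Qed.
Lemma raM' a b u : ra (ra u a) b = ra u (mul a b).
Proof. by case: HM => _ [_ [_ [_ [_ []]]]]. Qed.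
Lemma rala a b u : ra (la a u) b = la a (ra u b).
Proof. by case: HM => _ [_ [_ [_ [_ [_ []]]]]]. Qed.
Lemma sM_lin : islinear sM. Proof. by case: HM => _ [_ [_ [_ [_ [_ [_ []]]]]]]. Qed.
Lemma sMK u : sM (sM u) = u. Proof. by case: HM => _ [_ [_ [_ [_ [_ [_ [_ []]]]]]]]. Qed.
Lemma sM_la a u : sM (la a u) = ra (sM u) (sA a).
Proof. by case: HM => _ [_ [_ [_ [_ [_ [_ [_ [_ []]]]]]]]]. Qed.
Lemma sM_ra a u : sM (ra u a) = la (sA a) (sM u).
Proof. by case: HM => _ [_ [_ [_ [_ [_ [_ [_ [_ []]]]]]]]]. Qed.

Lemma mulDr a x y : mul a (x + y) = mul a x + mul a y. Proof. have H := linD (mul_linr a); exact: H. Qed.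
Lemma mulNr a x : mul a (- x) = - mul a x. Proof. have H := linN (mul_linr a); exact: H. Qed.
Lemma mulDl a x y : mul (x + y) a = mul x a + mul y a. Proof. have H := linD (mul_linl a); exact: H. Qed.
Lemma mulNl a x : mul (- x) a = - mul x a. Proof. have H := linN (mul_linl a); exact: H. Qed.
Lemma mul0r' a : mul 0 a = 0. Proof. have H := lin0 (mul_linl a); exact: H. Qed.
Lemma mulr0' a : mul a 0 = 0. Proof. have H := lin0 (mul_linr a); exact: H. Qed.
Lemma laDr a x y : la a (x + y) = la a x + la a y. Proof. have H := linD (la_linr a); exact: H. Qed.
Lemma laNr a x : la a (- x) = - la a x. Proof. have H := linN (la_linr a); exact: H. Qed.
Lemma laDl u x y : la (x + y) u = la x u + la y u. Proof. have H := linD (la_linl u); exact: H. Qed.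
Lemma laNl u x : la (- x) u = - la x u. Proof. have H := linN (la_linl u); exact: H. Qed.
Lemma la0l u : la 0 u = 0. Proof. have H := lin0 (la_linl u); exact: H. Qed.
Lemma la0r a : la a 0 = 0. Proof. have H := lin0 (la_linr a); exact: H. Qed.
Lemma raDr u x y : ra u (x + y) = ra u x + ra u y. Proof. have H := linD (ra_linr u); exact: H. Qed.
Lemma raNr u x : ra u (- x) = - ra u x. Proof. have H := linN (ra_linr u); exact: H. Qed.
Lemma raDl a x y : ra (x + y) a = ra x a + ra y a. Proof. have H := linD (ra_linl a); exact: H. Qed.
Lemma raNl a x : ra (- x) a = - ra x a. Proof. have H := linN (ra_linl a); exact: H. Qed.
Lemma ra0l a : ra 0 a = 0. Proof. have H := lin0 (ra_linl a); exact: H. Qed.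
Lemma ra0r u : ra u 0 = 0. Proof. have H := lin0 (ra_linr u); exact: H. Qed.

Section Seq.
Variable S : nat -> M -> A.
Hypothesis HS : forall i, islinear (S i).

Lemma SD i x y : S i (x + y) = S i x + S i y. Proof. exact: linD. Qed.
Lemma SN i x : S i (- x) = - S i x. Proof. exact: linN. Qed.
Lemma S0 i : S i 0 = 0. Proof. exact: lin0. Qed.

Definition dd b c x y := mul (S b x) (S c y) - S b (circ la ra (S c) x y).
Definition DD k x y := \sum_(b < k.+1) dd b (k - b) x y.

Ltac expand :=
  rewrite ?(opprD, opprK, mulDr, mulNr, mulDl, mulNl, SD, SN, raDr, raNr, raDl, raNl,
          laDr, laNr, laDl, laNl, mulA', raM', laM', rala).

Section U.
Variables u1 u2 u3 : M.

Definition Phi a (f : M -> M -> A) :=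
  (mul (S a u1) (f u2 u3) - S a (ra u1 (f u2 u3))) - f (circ la ra (S a) u1 u2) u3
  + f u1 (circ la ra (S a) u2 u3) - (mul (f u1 u2) (S a u3) - S a (la (f u1 u2) u3)).

Lemma Phi_ext a f g : (forall x y, f x y = g x y) -> Phi a f = Phi a g.
Proof. by move=> H; rewrite /Phi !H. Qed.

Lemma Phi_zero a : Phi a (fun _ _ => 0) = 0.
Proof. by rewrite /Phi mulr0' mul0r' ra0r la0l S0 !subrr !(addr0, add0r, oppr0). Qed.

Lemma Phi_add a f g : Phi a (fun x y => f x y + g x y) = Phi a f + Phi a g.
Proof. rewrite /Phi; expand; zeq. Qed.

Lemma Phi_sum a (I : Type) (r : seq I) (f : I -> M -> M -> A) :
  Phi a (fun x y => \sum_(i <- r) f i x y) = \sum_(i <- r) Phi a (f i).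
Proof.
elim: r => [|i r IH].
  by rewrite big_nil (Phi_ext a (g := fun _ _ => 0)) ?Phi_zero // => x y; rewrite big_nil.
rewrite big_cons -IH -Phi_add; apply: Phi_ext => x y; by rewrite big_cons.
Qed.

Definition Gid a b c := mul (S a u1) (dd b c u2 u3) - S a (ra u1 (dd b c u2 u3))
  + S a (la (dd b c u1 u2) u3) - mul (S b (circ la ra (S a) u1 u2)) (S c u3).
Definition Gcyc a b c := - mul (mul (S b u1) (S c u2)) (S a u3)
  + S b (la (S c (circ la ra (S a) u1 u2)) u3) + dd b c u1 (circ la ra (S a) u2 u3).
Definition Gac a b c := mul (S b (circ la ra (S c) u1 u2)) (S a u3).
Definition Gab a b c := S b (ra (circ la ra (S a) u1 u2) (S c u3)).

Lemma P1 a b c : Phi a (dd b c) = Gid a b c + Gcyc a b c + Gac a b c + Gab a b c.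
Proof. rewrite /Phi /Gid /Gcyc /Gac /Gab /dd /circ; expand; zeq. Qed.

Lemma P2 a b c : Gid a b c + Gcyc c a b + Gac c b a + Gab b a c = 0.
Proof. rewrite /Gid /Gcyc /Gac /Gab /dd /circ; expand; zcancel. Qed.

Lemma cube_Phi n : cube n (fun a b c => Phi a (dd b c)) = 0.
Proof.
transitivity (cube n (fun a b c => Gid a b c + Gcyc c a b + Gac c b a + Gab b a c)).
  rewrite (@cube_ext _ n _ _ (fun a b c => P1 a b c)) (cube4 n Gid Gcyc Gac Gab).
  rewrite (cube4 n Gid (fun a b c => Gcyc c a b) (fun a b c => Gac c b a) (fun a b c => Gab b a c)).
  by rewrite -(cube_cyc n Gcyc) -(cube_swap13 n Gac) -(cube_swap12 n Gab).
by rewrite (@cube_ext _ n _ _ (fun a b c => P2 a b c)) cube0.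
Qed.

Lemma Phi_D0 n : (forall k, (k < n)%N -> forall x y, DD k x y = 0) -> Phi 0 (DD n) = 0.
Proof.
move=> H0.
have E : \sum_(a < n.+1) Phi a (DD (n - a)) = 0.
  transitivity (cube n (fun a b c => Phi a (dd b c))); last exact: cube_Phi.
  rewrite cubeE; apply: eq_bigr => a _.
  by rewrite /DD Phi_sum.
have E' : \sum_(i < n) Phi i.+1 (DD (n - i.+1)) = 0.
  apply: big1 => i _.
  rewrite (@Phi_ext _ _ (fun _ _ => 0)) ?Phi_zero // => x y; apply: H0.
  have := ltn_ord i; lia.
by rewrite big_ord_recl subn0 E' addr0 in E.
Qed.
End U.

Lemma cocycle (T : M -> A) n : S 0 = T -> (forall k, (k < n)%N -> forall x y, DD k x y = 0) ->
  forall u1 u2 u3, dT2 mul la ra T (DD n) u1 u2 u3 = 0.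
Proof. by move=> <- H u1 u2 u3; rewrite -(Phi_D0 u1 u2 u3 H). Qed.
End Seq.
End Alg.

Lemma split3 (V : zmodType) (N : nat) (F : nat -> V) :
  \sum_(i < N.+2) F i = F 0%N + \sum_(i < N) F i.+1 + F N.+1.
Proof. by rewrite big_ord_recl big_ord_recr /= addrA. Qed.

Lemma peel (V : zmodType) (N : nat) (F G : nat -> V) :
  (forall i, (0 < i <= N)%N -> F i = G i) ->
  \sum_(i < N.+2) F i = \sum_(i < N.+2) G i + (F 0%N - G 0%N) + (F N.+1 - G N.+1).
Proof.
move=> H.
rewrite !split3 (eq_bigr (fun i : 'I_N => G i.+1)); last first.
  by move=> i _; apply: H; rewrite /= ltn_ord.
zeq.
Qed.

Theorem mainTheorem8 (K : fieldType) (A M : lmodType K)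
  (mul : A -> A -> A) (sA : A -> A)
  (la : A -> M -> M) (ra : M -> A -> M) (sM : M -> M) (T : M -> A)
  (HA : inv_assoc_algebra mul sA)
  (HM : inv_bimodule mul sA la ra sM)
  (HT : rel_RB mul sA la ra sM T)
  (H2 : iH2_trivial mul sA la ra sM T) :
  forall (N : nat) (Ts : nat -> M -> A),
    is_deformation mul sA la ra sM T N Ts ->
    exists T' : M -> A,
      is_deformation mul sA la ra sM T N.+1
        (fun i => if (i <= N)%N then Ts i else T').
Proof.
move=> N Ts [HT0 [HTl HTe]].
pose S := fun i => if (i <= N)%N then Ts i else (fun _ : M => 0 : A).
have ES : forall i, (i <= N)%N -> S i = Ts i by move=> i Hi; rewrite /S Hi.
have ES' : S N.+1 = (fun _ => 0) by rewrite /S ltnn.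
have HS : forall i, islinear (S i).
  by move=> i; rewrite /S; case: ifP => Hi; [exact: (HTl i Hi).1 | exact: lin_zero].
have HSs : forall i x, S i (sM x) = sA (S i x).
  move=> i x; rewrite /S; case: ifP => Hi; first exact: (HTl i Hi).2.
  by rewrite (lin0 (sA_lin HA)).
have HS0 : S 0%N = T by rewrite ES.
have H0 : forall k, (k < N.+1)%N -> forall x y, DD mul la ra S k x y = 0.
  move=> k Hk x y; rewrite /DD /dd.
  transitivity (\sum_(b < k.+1) (mul (Ts b x) (Ts (k - b)%N y)
                 - Ts b (circ la ra (Ts (k - b)%N) x y))).
    apply: eq_bigr => b _; have Hb := ltn_ord b.
    rewrite (ES b); last lia.
    rewrite (ES (k - b)%N); last lia.
    done.
  by rewrite sumrB (HTe k _ x y) ?subrr // -ltnS.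
have Hcoc := cocycle HA HM HS HS0 H0.
have Hi2 : iHom2 sA sM (DD mul la ra S N.+1).
  split; [|split].
  - move=> u; apply: lin_sum_fun => b; rewrite /dd /circ; apply: lin_sub.
      exact: lin_comp (mul_linr HA _) (HS _).
    apply: lin_comp (HS _) _; apply: lin_add.
      exact: lin_comp (ra_linr HM u) (HS _).
    exact: la_linr HM _.
  - move=> v; apply: lin_sum_fun => b; rewrite /dd /circ; apply: lin_sub.
      exact: lin_comp (mul_linl HA _) (HS _).
    apply: lin_comp (HS _) _; apply: lin_add.
      exact: ra_linl HM _.
    exact: lin_comp (la_linl HM v) (HS _).
  - move=> u v; rewrite /DD (lin_sumE (sA_lin HA)).
    transitivity (\sum_(b < N.+2) (mul (S (N.+1 - b)%N (sM v)) (S b (sM u))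
                 - S b (circ la ra (S (N.+1 - b)%N) (sM v) (sM u)))).
      apply: eq_bigr => b _.
      rewrite /dd (linD (sA_lin HA)) (linN (sA_lin HA)) (sA_mul HA) -!HSs.
      rewrite /circ (linD (sM_lin HM)) (sM_la HM) (sM_ra HM) -!HSs.
      by rewrite [la _ _ + _]addrC.
    rewrite /dd !sumrB; congr (_ - _).
    rewrite (reindex_inj rev_ord_inj) /=; apply: eq_bigr => b _.
    by rewrite subSS subKn // -ltnS.
have [g [Hg Hdg]] := H2 _ Hi2 Hcoc.
exists g.
split; [|split].
- by rewrite /= HT0.
- move=> i Hi /=; case: ifP => HiN; first exact: HTl.
  split; first exact: Hg.1.
  by move=> u; rewrite (proj2 Hg).
- move=> k Hk u v /=; case: (leqP k N) => HkN.
    transitivity (\sum_(i < k.+1) mul (Ts i u) (Ts (k - i)%N v)).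
      apply: eq_bigr => i _; have Hi := ltn_ord i.
      rewrite ifT; last lia.
      by rewrite ifT; last lia.
    rewrite (HTe k HkN u v).
    apply: eq_bigr => i _; have Hi := ltn_ord i.
    rewrite ifT; last lia.
    by rewrite ifT; last lia.
  have Ek : k = N.+1 by lia.
  subst k.
  have HD := Hdg u v.
  rewrite /DD (@split3 _ N (fun i => dd mul la ra S i (N.+1 - i)%N u v)) in HD.
  rewrite /dd sumrB in HD.
  rewrite (@split3 _ N (fun i => mul ((if (i <= N)%N then Ts i else g) u)
        ((if (N.+1 - i <= N)%N then Ts (N.+1 - i)%N else g) v))).
  rewrite (@split3 _ N (fun i => (if (i <= N)%N then Ts i else g)
        (circ la ra (if (N.+1 - i <= N)%N then Ts (N.+1 - i)%N else g) u v))).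
  rewrite (eq_bigr (fun i : 'I_N => mul (S i.+1 u) (S (N.+1 - i.+1)%N v))); last first.
    move=> i _; have Hi := ltn_ord i.
    rewrite (ES i.+1) // (ES (N.+1 - i.+1)%N); last lia.
    rewrite ifT //; rewrite ifT //; lia.
  rewrite [X in _ = _ + X + _](eq_bigr (fun i : 'I_N => S i.+1 (circ la ra (S (N.+1 - i.+1)%N) u v))); last first.
    move=> i _; have Hi := ltn_ord i.
    rewrite (ES i.+1) // (ES (N.+1 - i.+1)%N); last lia.
    rewrite ifT //; rewrite ifT //; lia.
  rewrite ?subn0 ?subnn ES' HS0 /= in HD.
  rewrite ?subn0 ?subnn ?ltnn ?leq0n HT0 /=.
  move/eqP: HD; rewrite -subr_eq0 => /eqP HD.
  apply/eqP; rewrite -subr_eq0; apply/eqP.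
  rewrite -[RHS]HD.
  apply/eqP; rewrite -subr_eq0; apply/eqP.
  have HTl' := HT.1.
  rewrite /dT1 /lT /rT /circ (mulr0' HA) (mul0r' HA) (ra0r HM) (la0l HM) addr0 (lin0 HTl').
  rewrite !(linD HTl').
  zcancel.
Qed.
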